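(* Let $R$ be a finite commutative chain ring with maximal ideal $\langle a\rangle$, $a$ of nilpotency index $t$, residue field $\mathbb F_q$; let $t_i(X_i)$, $I$, $A$ be as in the context. Let $\mathcal K\neq0$ be a Hensel lift of a multivariable semisimple code in $A$, and let $\overline{\mathcal K}$ be its image in $\mathbb F_q[X_1,\dots,X_r]/\langle\bar t_1(X_1),\dots,\bar t_r(X_r)\rangle$ under reduction modulo $\langle a\rangle$. Then $d(\mathcal K)=d(\overline{\mathcal K})$.
   Context: Bars denote reduction mod $\langle a\rangle$, coefficientwise on polynomials. For $i=1,\dots,r$, $t_i(X_i)\in R[X_i]$ is monic with $\bar t_i$ square-free; $I=\langle t_1(X_1),\dots,t_r(X_r)\rangle$, $A=R[X_1,\dots,X_r]/I$. A semisimple code is an ideal of $A$. Elements of $A$ (resp. of the reduced algebra over $\mathbb F_q$) are identified with coefficient vectors with respect to the monomial basis $X_1^{i_1}\cdots X_r^{i_r}$, $0\le i_k<\deg t_k$; $d(\cdot)$ is the minimum Hamming weight (number of nonzero coordinates) of the nonzero elements of a code. An admissible family for a code $\mathcal K$ is a family $G_0,\dots,G_t\in R[X_1,\dots,X_r]$ with $\bigcap_{i=0}^t\mathrm{Ann}_A\langle G_i+I\rangle=0$, $\mathrm{Ann}_A\langle G_i+I\rangle+\mathrm{Ann}_A\langle G_j+I\rangle=A$ for $i\ne j$, and $\mathcal K=\langle G_1,aG_2,\dots,a^{t-1}G_t\rangle+I$. $\mathcal K$ is a Hensel lift of a multivariable semisimple code if it has an admissible family with $\langle G_1+I\rangle\neq0$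 and $\langle G_i+I\rangle=0$ for all $i=2,\dots,t$. *)

(* Defs.v *)
From HB Require Import structures.
From mathcomp Require Import all_boot all_order all_algebra.
From mathcomp Require Import mpoly.
Set Implicit Arguments. Unset Strict Implicit. Unset Printing Implicit Defensive.
Import GRing.Theory.
Local Open Scope ring_scope.

Definition is_ideal (R : finComNzRingType) (S : {set R}) : Prop :=
  [/\ (0 : R) \in S,
      forall x y, x \in S -> y \in S -> x + y \in S &
      forall r x, x \in S -> r * x \in S].

Definition princ_ideal (R : finComNzRingType) (a : R) : {set R} :=
  [set x | [exists y, x == a * y]].

Definition chain_ring (R : finComNzRingType) : Prop :=
  forall S T : {set R}, is_ideal S -> is_ideal T -> S \subset T \/ T \subset S.

Definition maximal_ideal (R : finComNzRingType) (M : {set R}) : Prop :=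
  [/\ is_ideal M, M != [set: R] &
      forall S : {set R}, is_ideal S -> M \subset S -> S = M \/ S = [set: R]].

Definition squarefree (F : fieldType) (p : {poly F}) : Prop :=
  forall d : {poly F}, (d * d %| p)%R -> (size d <= 1)%N.

Definition polyInVar (S : nzRingType) (r : nat) (i : 'I_r) (p : {poly S})
  : {mpoly S[r]} :=
  \sum_(k < size p) mpolyC r p`_k * 'X_i ^+ k.

Definition inI (S : comNzRingType) (r : nat) (T : 'I_r -> {poly S})
  (f : {mpoly S[r]}) : Prop :=
  exists h : 'I_r -> {mpoly S[r]}, f = \sum_(i < r) h i * polyInVar i (T i).

(* a polynomial is reduced if it is a linear combination of the monomial basis
   X_1^{i_1}...X_r^{i_r}, 0 <= i_k < deg t_k; reduced polynomials are the
   canonical representatives of elements of S[X]/I (t_k monic) *)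
Definition reduced (S : nzRingType) (r : nat) (T : 'I_r -> {poly S})
  (f : {mpoly S[r]}) : Prop :=
  forall m, m \in msupp f -> forall k : 'I_r, (m k < (size (T k)).-1)%N.

Definition hweight (S : nzRingType) (r : nat) (f : {mpoly S[r]}) : nat :=
  size (msupp f).

(* d is the minimum distance of the code C (an ideal of S[X] containing I,
   i.e. an ideal of S[X]/I): each element of S[X]/I is represented by its
   unique reduced representative, which lies in C iff the class lies in C/I *)
Definition is_min_dist (S : nzRingType) (r : nat) (T : 'I_r -> {poly S})
  (C : {mpoly S[r]} -> Prop) (d : nat) : Prop :=
  (exists f, [/\ C f, reduced T f, f != 0 & hweight f = d]) /\
  (forall f, C f -> reduced T f -> f != 0 -> (d <= hweight f)%N).

(* K = <G_1, a G_2, ..., a^{t-1} G_t> + I   (as an ideal of R[X] containing I) *)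
Definition codeK (R : comNzRingType) (r : nat) (T : 'I_r -> {poly R})
  (a : R) (t : nat) (G : nat -> {mpoly R[r]}) (f : {mpoly R[r]}) : Prop :=
  exists (c : 'I_t -> {mpoly R[r]}) (h : {mpoly R[r]}),
    f = \sum_(k < t) c k * (a ^+ k *: G k.+1) + h /\ inI T h.

(* Ann_A <G_i + I> as an ideal of R[X] containing I *)
Definition annI (R : comNzRingType) (r : nat) (T : 'I_r -> {poly R})
  (g : {mpoly R[r]}) (f : {mpoly R[r]}) : Prop := inI T (f * g).

Definition admissible (R : comNzRingType) (r : nat) (T : 'I_r -> {poly R})
  (t : nat) (G : nat -> {mpoly R[r]}) : Prop :=
  (forall f, (forall i, (i <= t)%N -> annI T (G i) f) -> inI T f) /\
  (forall i j, (i <= t)%N -> (j <= t)%N -> i <> j ->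
     exists u v, [/\ annI T (G i) u, annI T (G j) v & inI T (u + v - 1)]).

Definition hensel_family (R : comNzRingType) (r : nat) (T : 'I_r -> {poly R})
  (t : nat) (G : nat -> {mpoly R[r]}) : Prop :=
  ~ inI T (G 1%N) /\ (forall i, (2 <= i <= t)%N -> inI T (G i)).

(* image of the code K under reduction mod <a>, as an ideal of F[X] containing
   Ibar = <tbar_1(X_1), ..., tbar_r(X_r)> *)
Definition codeImage (R : comNzRingType) (F : fieldType) (pi : {rmorphism R -> F})
  (r : nat) (T : 'I_r -> {poly R}) (K : {mpoly R[r]} -> Prop)
  (g : {mpoly F[r]}) : Prop :=
  exists f h, [/\ K f, inI (fun i => map_poly pi (T i)) h &
                  g = map_mpoly pi f + h].

(* Main.v *)
Require Import Defs.
From HB Require Import structures.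
From mathcomp Require Import all_boot all_order all_algebra.
From mathcomp Require Import mpoly bigenough ssrcomplements ring.
Import GRing.Theory BigEnough.
Local Open Scope ring_scope.
Set Implicit Arguments. Unset Strict Implicit. Unset Printing Implicit Defensive.

Section Gen.
Context (R : comNzRingType) (n : nat) (T : 'I_n -> {poly R}).
Implicit Types (i : 'I_n) (p q : {poly R}).

Lemma inI0 : inI T 0.
Proof. by exists (fun _ => 0); rewrite big1 // => i _; rewrite mul0r. Qed.

Lemma inID f g : inI T f -> inI T g -> inI T (f + g).
Proof.
move=> [h1 ->] [h2 ->]; exists (fun i => h1 i + h2 i).
by rewrite -big_split; apply: eq_bigr => i _; rewrite mulrDl.
Qed.

Lemma inIM g f : inI T f -> inI T (g * f).
Proof.
move=> [h ->]; exists (fun i => g * h i).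
by rewrite mulr_sumr; apply: eq_bigr => i _; rewrite mulrA.
Qed.

Lemma inIN f : inI T f -> inI T (- f).
Proof. by move=> /(inIM (-1)); rewrite mulN1r. Qed.

Lemma inIB f g : inI T f -> inI T g -> inI T (f - g).
Proof. by move=> hf /inIN; apply: inID. Qed.

Lemma inIZ c f : inI T f -> inI T (c *: f).
Proof. by rewrite -mul_mpolyC; apply: inIM. Qed.

Lemma inIP g i : inI T (g * polyInVar i (T i)).
Proof.
exists (fun j => if j == i then g else 0).
rewrite (bigD1 i) //= eqxx big1 ?addr0 // => j /negbTE ->; by rewrite mul0r.
Qed.

Lemma inI_sum (I : Type) (s : seq I) (P : pred I) (F : I -> {mpoly R[n]}) :
  (forall j, P j -> inI T (F j)) -> inI T (\sum_(j <- s | P j) F j).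
Proof.
move=> H; elim/big_rec: _ => [|j x Pj Hx]; first exact: inI0.
by apply: inID => //; apply: H.
Qed.

Lemma PV i p : polyInVar i p = (map_poly (@mpolyC n R) p).['X_i].
Proof.
rewrite horner_coef size_map_inj_poly; last exact: rmorph0.
  by apply: eq_bigr => k _; rewrite coef_map.
by move=> x y /(congr1 (mcoeff 0%MM)); rewrite !mcoeffC eqxx !mulr1.
Qed.

Lemma PVM i p q : polyInVar i (p * q) = polyInVar i p * polyInVar i q.
Proof. by rewrite !PV rmorphM hornerM. Qed.
Lemma PVD i p q : polyInVar i (p + q) = polyInVar i p + polyInVar i q.
Proof. by rewrite !PV rmorphD hornerD. Qed.
Lemma PV0 i : polyInVar i (0 : {poly R}) = 0.
Proof. by rewrite PV rmorph0 horner0. Qed.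
Lemma PVC i (c : R) : polyInVar i c%:P = c%:MP.
Proof. by rewrite PV map_polyC hornerC. Qed.
Lemma PVZ i (c : R) p : polyInVar i (c *: p) = c *: polyInVar i p.
Proof. by rewrite -mul_polyC PVM PVC mul_mpolyC. Qed.
Lemma PVXn i k : polyInVar i ('X^k : {poly R}) = 'X_i ^+ k.
Proof. by rewrite PV map_polyXn hornerXn. Qed.
Lemma PV_sum i (I : Type) (s : seq I) (P : pred I) (F : I -> {poly R}) :
  polyInVar i (\sum_(j <- s | P j) F j) = \sum_(j <- s | P j) polyInVar i (F j).
Proof.
elim/big_rec2: _ => [|j x y Pj <-]; first exact: PV0.
by rewrite PVD.
Qed.

End Gen.

Section Red.
Context (R : comNzRingType) (n : nat) (T : 'I_n -> {poly R}).
Hypothesis hT : forall i, T i \is monic.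
Implicit Types (i : 'I_n) (p q : {poly R}) (f g h : {mpoly R[n]}).

Lemma reduced_sub f g : {subset msupp g <= msupp f} -> reduced T f -> reduced T g.
Proof. by move=> S Hf m /S; apply: Hf. Qed.

Lemma reduced0 : reduced T 0.
Proof. by move=> m; rewrite mcoeff_msupp raddf0 eqxx. Qed.

Lemma reducedD f g : reduced T f -> reduced T g -> reduced T (f + g).
Proof. by move=> Hf Hg m /msuppD_le; rewrite mem_cat => /orP [/Hf|/Hg]. Qed.

Lemma reducedZ c f : reduced T f -> reduced T (c *: f).
Proof. by apply: reduced_sub; apply: msuppZ_le. Qed.

Lemma reducedN f : reduced T f -> reduced T (- f).
Proof. by rewrite -scaleN1r; apply: reducedZ. Qed.

Definition Red f := exists g, reduced T g /\ inI T (f - g).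

Lemma Red0 : Red 0.
Proof. by exists 0; split; [apply: reduced0| rewrite subrr; apply: inI0]. Qed.

Lemma RedD f g : Red f -> Red g -> Red (f + g).
Proof.
move=> [f' [rf If]] [g' [rg Ig]]; exists (f' + g'); split; first exact: reducedD.
by rewrite opprD addrACA; apply: inID.
Qed.

Lemma RedZ c f : Red f -> Red (c *: f).
Proof.
move=> [f' [rf If]]; exists (c *: f'); split; first exact: reducedZ.
by rewrite -scalerBr; apply: inIZ.
Qed.

Lemma RedN f : Red f -> Red (- f).
Proof. by rewrite -scaleN1r; apply: RedZ. Qed.

Lemma RedI f h : Red f -> inI T h -> Red (f + h).
Proof.
move=> [f' [rf If]] Ih; exists f'; split => //.
by rewrite addrAC; apply: inID.
Qed.

Lemma Red_sum (I : Type) (s : seq I) (P : pred I) (F : I -> {mpoly R[n]}) :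
  (forall j, P j -> Red (F j)) -> Red (\sum_(j <- s | P j) F j).
Proof.
move=> H; elim/big_rec: _ => [|j x Pj Hx]; first exact: Red0.
by apply: RedD => //; apply: H.
Qed.

Lemma PT_expand i : polyInVar i (T i) =
  'X_i ^+ (size (T i)).-1 + \sum_(j < (size (T i)).-1) ((T i)`_j)%:MP * 'X_i ^+ j.
Proof.
have sz : size (T i) = (size (T i)).-1.+1.
  by rewrite prednK // size_poly_gt0 monic_neq0.
rewrite /polyInVar.
move: (monicP (hT i)); rewrite /lead_coef => lc.
rewrite [in LHS]sz big_ord_recr /= addrC; congr (_ + _).
by rewrite lc mpolyC1 mul1r.
Qed.

Lemma RedX m : Red 'X_[m].
Proof.
elim: (mdeg m).+1 {-2}m (ltnSn (mdeg m)) => // N IH {}m hm.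
case: (boolP [forall k, (m k < (size (T k)).-1)%N]) => [/forallP H | ].
  exists 'X_[m]; split; last by rewrite subrr; apply: inI0.
  by move=> m'; rewrite msuppX mem_seq1 => /eqP ->.
move/forallPn => [k]; rewrite -leqNgt => hk.
set d := (size (T k)).-1 in hk *.
set m0 := (m - U_(k) *+ d)%MM.
have em : m = (m0 + U_(k) *+ d)%MM.
  apply/mnmP => i; rewrite mnmDE mnmBE mulmnE mnm1E.
  by case: eqP => [<-|_]; rewrite ?mul1n ?subnK // mul0n subn0 addn0.
have eX : 'X_[m] = 'X_[m0] * polyInVar k (T k) -
    \sum_(j < d) (T k)`_j *: 'X_[(m0 + U_(k) *+ j)%MM].
  rewrite PT_expand mulrDr mulr_sumr em mpolyXD -mpolyXn.
  rewrite -/d.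
  have -> : \sum_(j < d) 'X_[m0] * (((T k)`_j)%:MP * 'X_k ^+ j) =
     \sum_(j < d) (T k)`_j *: 'X_[(m0 + U_(k) *+ j)%MM].
    by apply: eq_bigr => j _; rewrite mulrCA mul_mpolyC mpolyXn -mpolyXD.
  by rewrite addrK.
rewrite eX addrC; apply: RedI; last exact: inIP.
apply: RedN; apply: Red_sum => j _; apply: RedZ; apply: IH.
move: hm; rewrite em !mdegD !mdegMn mdeg1 !mul1n => hm.
rewrite ltnS in hm; apply: leq_trans hm.
by rewrite -addnS leq_add2l.
Qed.

Lemma Red_all f : Red f.
Proof.
elim/mpolyind: f => [|c m p _ _ Hp]; first exact: Red0.
by apply: RedD => //; apply: RedZ; apply: RedX.
Qed.

End Red.

Section Uniq.
Context (R : comNzRingType) (n : nat) (T : 'I_n -> {poly R}).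
Hypothesis hT : forall i, T i \is monic.
Implicit Types (i : 'I_n) (p q : {poly R}) (f g h : {mpoly R[n]}).

Definition redm (m : 'X_{1..n}) : {mpoly R[n]} :=
  \prod_(i < n) polyInVar i (Pdiv.Ring.rmodp ('X^(m i)) (T i)).
Definition red f := \sum_(m <- msupp f) f@_m *: redm m.

Lemma redwE f k : (msize f <= k)%N ->
  red f = \sum_(m : 'X_{1..n < k}) f@_m *: redm m.
Proof.
pose I : subFinType _ := 'X_{1..n < k}.
move=> le_pk; rewrite /red (big_mksub I) /=; first last.
  by move=> x /msize_mdeg_lt/leq_trans/(_ le_pk).
  by rewrite msupp_uniq.
rewrite big_rmcond //= => j /memN_msupp_eq0 ->.
by rewrite scale0r.
Qed.

Lemma red_is_linear : linear red.
Proof.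
move=> c p q; pose_big_enough j; first rewrite !(redwE (k := j)) //.
  rewrite scaler_sumr -big_split /=; apply/eq_bigr=> k _.
  by rewrite !scalerA -scalerDl mcoeffD mcoeffZ.
by close.
Qed.

HB.instance Definition _ := GRing.isLinear.Build R {mpoly R[n]} {mpoly R[n]}
  _ red red_is_linear.

Lemma red0 : red 0 = 0.
Proof. by rewrite /red big1_seq // => m; rewrite mcoeff_msupp raddf0 eqxx. Qed.

Lemma redZ c f : red (c *: f) = c *: red f.
Proof. by rewrite -[c *: f]addr0 red_is_linear red0 addr0. Qed.

Lemma red_X m : red 'X_[m] = redm m.
Proof. by rewrite /red msuppX big_seq1 mcoeffX eqxx scale1r. Qed.

Lemma redm_small (m : 'X_{1..n}) : (forall k, (m k < (size (T k)).-1)%N) -> redm m = 'X_[m].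
Proof.
move=> H; rewrite /redm mpolyXE_id; apply: eq_bigr => i _.
rewrite Pdiv.Ring.rmodp_small ?PVXn // size_polyXn.
by move: (H i); case: (size (T i)) => //= s; rewrite ltnS.
Qed.

Lemma red_reduced f : reduced T f -> red f = f.
Proof.
move=> rf; rewrite /red [X in _ = X]mpolyE; apply: eq_big_seq => m hm.
by rewrite redm_small //; apply: rf.
Qed.

Lemma red_XP m i : red ('X_[m] * polyInVar i (T i)) = 0.
Proof.
have -> : 'X_[m] * polyInVar i (T i) =
   \sum_(j < size (T i)) (T i)`_j *: 'X_[(m + U_(i) *+ j)%MM].
  rewrite /polyInVar mulr_sumr; apply: eq_bigr => j _.
  by rewrite mulrCA mul_mpolyC mpolyXn -mpolyXD.
rewrite raddf_sum /=.
pose C := \prod_(l < n | l != i) polyInVar l (Pdiv.Ring.rmodp ('X^(m l)) (T l)).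
have E j : red 'X_[(m + U_(i) *+ j)%MM] =
    polyInVar i (Pdiv.Ring.rmodp ('X^(m i + j)) (T i)) * C.
  rewrite red_X /redm (bigD1 i) //= mnmDE mulmnE mnm1E eqxx mul1n; congr (_ * _).
  apply: eq_bigr => l /negbTE nl; rewrite mnmDE mulmnE mnm1E eq_sym nl mul0n addn0.
  done.
under eq_bigr do rewrite linearZ /= E.
under eq_bigr do rewrite scalerAl.
rewrite -mulr_suml.
under eq_bigr do rewrite -PVZ.
rewrite -PV_sum.
under eq_bigr do rewrite -(Pdiv.RingMonic.rmodpZ (hT i)).
rewrite -Pdiv.RingMonic.rmodp_sum //.
have -> : \sum_(j < size (T i)) (T i)`_j *: 'X^(m i + j) = 'X^(m i) * T i.
  rewrite -[X in _ = _ * X]coefK poly_def mulr_sumr; apply: eq_bigr => j _.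
  by rewrite -scalerAr exprD.
by rewrite Pdiv.RingMonic.rmodp_mull // PV0 mul0r.
Qed.

Lemma red_I h : inI T h -> red h = 0.
Proof.
move=> [hh ->]; rewrite raddf_sum big1 // => i _.
rewrite [hh i]mpolyE mulr_suml raddf_sum big1 // => m _.
by rewrite -scalerAl /= redZ red_XP scaler0.
Qed.

Lemma reduced_inI h : reduced T h -> inI T h -> h = 0.
Proof. by move=> rh Ih; rewrite -(red_reduced rh) red_I. Qed.

End Uniq.

Section Chain.
Context (R : finComNzRingType) (a : R) (t : nat)
  (hchain : chain_ring R)
  (hmax : maximal_ideal (princ_ideal a))
  (hnil : a ^+ t = 0 /\ a ^+ t.-1 != 0).

Lemma princP (x y : R) : reflect (exists z, y = x * z) (y \in princ_ideal x).
Proof.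
rewrite inE; apply: (iffP existsP) => [[z /eqP ->]|[z ->]]; by exists z.
Qed.

Lemma princ_is_ideal (x : R) : is_ideal (princ_ideal x).
Proof.
split.
- by apply/princP; exists 0; rewrite mulr0.
- move=> y z /princP [y' ->] /princP [z' ->]; apply/princP; exists (y' + z').
  by rewrite mulrDr.
- move=> c y /princP [y' ->]; apply/princP; exists (c * y'); by rewrite mulrCA.
Qed.

Lemma unitL x : x \notin princ_ideal a -> exists y, x * y = 1.
Proof.
move=> hx.
have xin : x \in princ_ideal x by apply/princP; exists 1; rewrite mulr1.
case: hmax => Ia _ Hm.
case: (hchain (princ_is_ideal x) Ia) => S.
  by move/subsetP: S => /(_ x xin); rewrite (negbTE hx).
case: (Hm _ (princ_is_ideal x) S) => E.
  by move: xin; rewrite E (negbTE hx).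
have : (1 : R) \in princ_ideal x by rewrite E inE.
by case/princP => y ->; exists y.
Qed.

Lemma t_gt0 : (0 < t)%N.
Proof.
rewrite lt0n; apply/negP => /eqP t0; case: hnil; rewrite t0 expr0 => /eqP.
by rewrite oner_eq0.
Qed.

Lemma unit_nz x : x \notin princ_ideal a -> a ^+ t.-1 * x != 0.
Proof.
move=> /unitL [y xy]; apply/eqP => H; case: hnil => _ /eqP; apply.
by rewrite -[a ^+ _]mulr1 -xy mulrA H mul0r.
Qed.

Lemma annL c : a * c = 0 -> exists y, c = a ^+ t.-1 * y.
Proof.
move=> ac.
suff H : forall i, (i <= t.-1)%N -> exists y, c = a ^+ i * y by apply: H.
elim=> [|i IH] hi; first by exists c; rewrite expr0 mul1r.
case: (IH (ltnW hi)) => y ey.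
case: (boolP (y \in princ_ideal a)) => [/princP [z ez]|hy].
  by exists z; rewrite ey ez mulrA -exprSr.
exfalso; move: (unitL hy) => [z yz].
have : a ^+ i.+1 = 0.
  have e : a ^+ i.+1 * y = a * c by rewrite ey mulrA -exprS.
  by rewrite -[a ^+ _]mulr1 -yz mulrA e ac mul0r.
move=> H; case: hnil => _ /eqP; apply.
by rewrite -(subnK hi) exprD H mulr0.
Qed.

End Chain.

Section Cmap.
Context (R S : nzRingType) (n : nat) (f : R -> S) (f0 : f 0 = 0).
Definition cmap (p : {mpoly R[n]}) : {mpoly S[n]} :=
  \sum_(m <- msupp p) f p@_m *: 'X_[m].

Lemma mcoeff_cmap p k : (cmap p)@_k = f p@_k.
Proof.
rewrite /cmap raddf_sum /=.
case: (boolP (k \in msupp p)) => hk.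
  rewrite (bigD1_seq k) ?msupp_uniq //= mcoeffZ mcoeffX eqxx mulr1 big1 ?addr0 //.
  by move=> m /negbTE nm; rewrite mcoeffZ mcoeffX nm mulr0.
rewrite (memN_msupp_eq0 hk) f0 big1_seq // => m /andP [_ hm].
rewrite mcoeffZ mcoeffX; case: eqP => [e|]; last by rewrite mulr0.
by move: hk; rewrite -e hm.
Qed.

Lemma msupp_cmap p : {subset msupp (cmap p) <= msupp p}.
Proof.
move=> m; rewrite !mcoeff_msupp mcoeff_cmap; apply: contra => /eqP ->.
by rewrite f0.
Qed.
End Cmap.

Definition divX (R : finComNzRingType) (x c : R) : R :=
  if c == 0 then 0 else odflt 0 [pick y : R | c == x * y].

Lemma divX0 (R : finComNzRingType) (x : R) : divX x 0 = 0.
Proof. by rewrite /divX eqxx. Qed.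

Lemma divXP (R : finComNzRingType) (x c : R) : (exists y, c = x * y) -> x * divX x c = c.
Proof.
move=> [y ey]; rewrite /divX; case: eqP => [->|_]; first by rewrite mulr0.
case: pickP => [z /eqP -> //|H].
by move: (H y); rewrite ey eqxx.
Qed.

Section Main.
Context (R : finComNzRingType) (a : R) (t : nat)
  (hchain : chain_ring R)
  (hmax : maximal_ideal (princ_ideal a))
  (hnil : a ^+ t = 0 /\ a ^+ t.-1 != 0)
  (F : finFieldType) (pi : {rmorphism R -> F})
  (hpi_surj : forall y : F, exists x : R, pi x = y)
  (hpi_ker : forall x : R, pi x = 0 <-> x \in princ_ideal a)
  (r : nat) (T : 'I_r -> {poly R})
  (hmonic : forall i, T i \is monic)
  (G : nat -> {mpoly R[r]})
  (hadm : admissible T t G)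
  (hhens : hensel_family T t G).

Local Notation K := (codeK T a t G).
Implicit Types (f g h : {mpoly R[r]}).

Lemma K_I h : inI T h -> K h.
Proof. by move=> Ih; exists (fun _ => 0), h; rewrite big1 ?add0r // => k _; rewrite mul0r. Qed.

Lemma K_D f g : K f -> K g -> K (f + g).
Proof.
move=> [c1 [h1 [-> I1]]] [c2 [h2 [-> I2]]].
exists (fun k => c1 k + c2 k), (h1 + h2); split; last exact: inID.
rewrite addrACA -big_split /=; congr (_ + _); apply: eq_bigr => k _.
by rewrite mulrDl.
Qed.

Lemma K_M g f : K f -> K (g * f).
Proof.
move=> [c [h [-> Ih]]]; exists (fun k => g * c k), (g * h); split; last exact: inIM.
by rewrite mulrDr mulr_sumr; congr (_ + _); apply: eq_bigr => k _; rewrite mulrA.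
Qed.

Lemma K_Z x f : K f -> K (x *: f).
Proof. by rewrite -mul_mpolyC; apply: K_M. Qed.

Lemma K_G1 g : K (g * G 1).
Proof.
have t0 := t_gt0 hnil.
exists (fun k : 'I_t => if val k == 0%N then g else 0), 0; split; last exact: inI0.
rewrite addr0 (bigD1 (Ordinal t0)) //= expr0 scale1r big1 ?addr0 //.
by move=> k; rewrite -val_eqE /= => /negbTE ->; rewrite mul0r.
Qed.

Lemma Gi_I i : (2 <= i <= t)%N -> inI T (G i).
Proof. by case: hhens => _; apply. Qed.

Lemma inter f : inI T (f * G 0) -> inI T (f * G 1) -> inI T f.
Proof.
move=> h0 h1; case: hadm => H _; apply: H => i it.
case: i it => [|[|i]] it //; rewrite /annI.
by apply: inIM; apply: Gi_I.
Qed.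

Lemma uv_ex : exists u v, [/\ inI T (u * G 0), inI T (v * G 1) & inI T (u + v - 1)].
Proof.
have t0 := t_gt0 hnil.
case: hadm => _ H; case: (H 0%N 1%N) => // u [v [Hu Hv Huv]].
by exists u, v.
Qed.

Lemma K_ann v f : inI T (v * G 1) -> K f -> inI T (f * v).
Proof.
move=> Hv [c [h [-> Ih]]]; rewrite mulrDl; apply: inID; last first.
  by rewrite mulrC; apply: inIM.
rewrite mulr_suml; apply: inI_sum => k _.
case: k => [[|k] kt] /=.
  rewrite expr0 scale1r.
  have -> : c (Ordinal kt) * G 1 * v = c (Ordinal kt) * (v * G 1) by ring.
  exact: inIM.
rewrite -mul_mpolyC.
have -> : c (Ordinal kt) * ((a ^+ k.+1)%:MP * G k.+2) * v =
   (c (Ordinal kt) * (a ^+ k.+1)%:MP * v) * G k.+2 by ring.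
by apply: inIM; apply: Gi_I.
Qed.

Lemma kill k y : inI T (y * G 0) -> inI T (G 1 ^+ k * y) -> inI T y.
Proof.
move=> H0; elim: k => [|k IH]; first by rewrite expr0 mul1r.
move=> Hk; apply: IH; apply: inter.
  by rewrite -mulrA; apply: inIM.
by rewrite mulrAC -exprSr.
Qed.

Definition Bd := (\sum_k size (T k)).+1.

Lemma reduced_mdeg f m : reduced T f -> m \in msupp f -> (mdeg m < Bd)%N.
Proof.
move=> rf /rf H; rewrite /Bd ltnS mdegE; apply: leq_sum => k _.
exact: leq_trans (ltnW (H k)) (leq_pred _).
Qed.

Definition enc f : {ffun 'X_{1..r < Bd} -> R} := [ffun m => f@_(val m)].

Lemma enc_inj f g : reduced T f -> reduced T g -> enc f = enc g -> f = g.
Proof.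
move=> rf rg e; apply/mpolyP => m.
case: (boolP (mdeg m < Bd)%N) => hm.
  by move/ffunP: e => /(_ (BMultinom hm)); rewrite !ffunE.
rewrite !memN_msupp_eq0 //; apply/negP => /(reduced_mdeg) H.
  by rewrite H in hm.
by rewrite H in hm.
Qed.

Lemma pig : exists i j, (i < j)%N /\ inI T (G 1 ^+ i - G 1 ^+ j).
Proof.
pose N := #|{ffun 'X_{1..r < Bd} -> R}|.+1.
have : forall i : 'I_N, exists e, exists g, [/\ reduced T g, inI T (G 1 ^+ i - g) & enc g = e].
  move=> i; case: (Red_all hmonic (G 1 ^+ i)) => g [rg Ig].
  by exists (enc g), g.
case/fin_all_exists => phi Hphi.
case: (boolP (injectiveb phi)) => [/injectiveP inj|].
  by move: (leq_card phi inj); rewrite card_ord ltnn.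
case/injectivePn => i [j ij eij].
have key : forall i j : 'I_N, phi i = phi j -> inI T (G 1 ^+ i - G 1 ^+ j).
  move=> i' j' e; case: (Hphi i') => gi [ri Ii ei]; case: (Hphi j') => gj [rj Ij ej].
  have egij : gi = gj by apply: enc_inj => //; rewrite ei ej.
  have -> : G 1 ^+ i' - G 1 ^+ j' = (G 1 ^+ i' - gi) - (G 1 ^+ j' - gj).
    by rewrite egij opprB addrA subrK.
  exact: inIB.
case: (ltngtP i j) => [lt|lt|eq]; last by move: ij; rewrite -val_eqE /= eq eqxx.
  by exists i, j; split => //; apply: key.
by exists j, i; split => //; apply: key.
Qed.

Lemma uK u : inI T (u * G 0) -> exists z, inI T (u - z * G 1).
Proof.
move=> Hu; case: pig => i [j [lt Ij]].
have y0 : inI T (u * (1 - G 1 ^+ (j - i)) * G 0).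
  by rewrite mulrAC mulrC; apply: inIM.
have y1 : inI T (G 1 ^+ i * (u * (1 - G 1 ^+ (j - i)))).
  have -> : G 1 ^+ i * (u * (1 - G 1 ^+ (j - i))) = u * (G 1 ^+ i - G 1 ^+ j).
    by rewrite mulrCA mulrBr mulr1 -exprD subnKC // ltnW.
  exact: inIM.
move: (kill y0 y1) => Hy.
exists (u * G 1 ^+ (j - i).-1).
rewrite -mulrA -exprSr prednK ?subn_gt0 //.
by move: Hy; rewrite mulrBr mulr1.
Qed.

Local Notation Tb := (fun i => map_poly pi (T i)).

Lemma sizeTb k : size (Tb k) = size (T k).
Proof. by rewrite size_map_poly_id0 // (monicP (hmonic k)) rmorph1 oner_neq0. Qed.

Lemma map_PV i : map_mpoly pi (polyInVar i (T i)) = polyInVar i (Tb i).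
Proof.
rewrite /polyInVar rmorph_sum /= sizeTb; apply: eq_bigr => k _.
by rewrite rmorphM rmorphXn /= map_mpolyC map_mpolyX coef_map.
Qed.

Lemma map_I h : inI T h -> inI Tb (map_mpoly pi h).
Proof.
move=> [hh ->]; exists (fun i => map_mpoly pi (hh i)).
rewrite rmorph_sum /=; apply: eq_bigr => i _; rewrite rmorphM /=.
congr (_ * _); exact: map_PV.
Qed.

Definition lft (y : F) : R := if y == 0 then 0 else odflt 0 [pick x | pi x == y].

Lemma lft0 : lft 0 = 0.
Proof. by rewrite /lft eqxx. Qed.

Lemma pi_lft y : pi (lft y) = y.
Proof.
rewrite /lft; case: eqP => [->|_]; first exact: rmorph0.
case: pickP => [x /eqP //|H].
by case: (hpi_surj y) => x ex; move: (H x); rewrite ex eqxx.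
Qed.

Lemma map_cmap_lft (p : {mpoly F[r]}) : map_mpoly pi (cmap lft p) = p.
Proof. apply/mpolyP => m; rewrite mcoeff_map_mpoly mcoeff_cmap; [exact: pi_lft | exact: lft0]. Qed.

Lemma mpoly_nz (S : nzRingType) (p : {mpoly S[r]}) : p != 0 -> exists m, p@_m != 0.
Proof.
by move=> nz; exists (mlead p); rewrite mleadc_eq0.
Qed.

Lemma dir2 gb : codeImage pi T K gb -> reduced Tb gb -> gb != 0 ->
  exists f, [/\ K f, reduced T f, f != 0 & hweight f = hweight gb].
Proof.
move=> [f [hb [Kf Ihb egb]]] rg nz.
set gt := cmap lft gb.
case: Ihb => hh ehb.
set H := \sum_(i < r) cmap lft (hh i) * polyInVar i (T i).
have IH : inI T H by exists (fun i => cmap lft (hh i)).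
have mH : map_mpoly pi H = hb.
  rewrite ehb rmorph_sum /=; apply: eq_bigr => i _.
  rewrite rmorphM /=; congr (_ * _); [exact: map_cmap_lft | exact: map_PV].
set D := gt - f - H.
have mD : forall m, D@_m \in princ_ideal a.
  move=> m; apply/hpi_ker.
  rewrite -mcoeff_map_mpoly /D !rmorphB /= mH map_cmap_lft egb.
  by rewrite addrAC addrK subrr mcoeff0.
set w := cmap (divX a) D.
have eD : a *: w = D.
  apply/mpolyP => m; rewrite mcoeffZ mcoeff_cmap ?divX0 //.
  by apply: divXP; apply/princP.
have t0 := t_gt0 hnil.
have eF : a ^+ t.-1 *: gt = a ^+ t.-1 *: f + a ^+ t.-1 *: H.
  have -> : gt = f + H + a *: w by rewrite eD /D; ring.
  by rewrite scalerDr scalerA -exprSr prednK // (proj1 hnil) scale0r addr0 scalerDr.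
have supp : forall m, (m \in msupp (a ^+ t.-1 *: gt)) = (m \in msupp gb).
  move=> m; rewrite !mcoeff_msupp mcoeffZ mcoeff_cmap ?lft0 //.
  case: (eqVneq gb@_m 0) => [->|hm]; first by rewrite lft0 mulr0 eqxx.
  apply: (unit_nz hchain hmax hnil).
  by apply/negP => /hpi_ker; rewrite pi_lft; apply/eqP.
have pe : perm_eq (msupp (a ^+ t.-1 *: gt)) (msupp gb).
  by apply: uniq_perm; rewrite ?msupp_uniq.
exists (a ^+ t.-1 *: gt); split.
- by rewrite eF; apply: K_D; [apply: K_Z | apply: K_I; apply: inIZ].
- move=> m; rewrite supp => /rg H' k; by rewrite -sizeTb; apply: H'.
- case: (mpoly_nz nz) => m hm; apply/eqP => e.
  by move: (supp m); rewrite e mcoeff_msupp mcoeff0 eqxx mcoeff_msupp hm.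
- exact: perm_size.
Qed.

Lemma dir1 f : K f -> reduced T f -> f != 0 ->
  exists gb, [/\ codeImage pi T K gb, reduced Tb gb, gb != 0 &
                 (hweight gb <= hweight f)%N].
Proof.
move=> Kf rf nz.
have t0 := t_gt0 hnil.
pose P k := (k < t)%N && (a ^+ k *: f != 0).
have exP : exists k, P k by exists 0%N; rewrite /P t0 expr0 scale1r.
have ubP : forall k, P k -> (k <= t)%N by move=> k /andP [/ltnW].
case: (ex_maxnP exP ubP) => k /andP [kt nzk] maxk.
set f1 := a ^+ k *: f.
have af1 : a *: f1 = 0.
  rewrite /f1 scalerA -exprS.
  case: (boolP (k.+1 < t)%N) => lt.
    apply/eqP; apply/negP => /negP hh.
    by move: (maxk k.+1); rewrite /P lt hh => /(_ isT); rewrite ltnn.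
  have -> : k.+1 = t by apply/eqP; rewrite eqn_leq kt leqNgt lt.
  by rewrite (proj1 hnil) scale0r.
have cf1 : forall m, exists y, f1@_m = a ^+ t.-1 * y.
  move=> m; apply: (annL hchain hmax hnil).
  by rewrite -mcoeffZ af1 mcoeff0.
set g := cmap (divX (a ^+ t.-1)) f1.
have eg : a ^+ t.-1 *: g = f1.
  apply/mpolyP => m; rewrite mcoeffZ mcoeff_cmap ?divX0 //.
  exact: divXP.
have Kg : K (a ^+ t.-1 *: g) by rewrite eg; apply: K_Z.
have nzg : map_mpoly pi g != 0.
  case: (mpoly_nz nzk) => m hm; apply/eqP => e.
  have : (map_mpoly pi g)@_m = 0 by rewrite e mcoeff0.
  rewrite mcoeff_map_mpoly => /hpi_ker /princP [y ey].
  move: hm; rewrite -/f1 -eg mcoeffZ ey mulrA -exprSr prednK // (proj1 hnil).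
  by rewrite mul0r eqxx.
case: uv_ex => u [v [Hu Hv Huv]].
case: (uK Hu) => z Hz.
set y := g * v.
have Iy : inI T (a ^+ t.-1 *: y) by rewrite /y scalerAl; apply: K_ann.
case: (Red_all hmonic y) => y' [ry' Iyy'].
have y'0 : a ^+ t.-1 *: y' = 0.
  apply: (reduced_inI hmonic); first exact: reducedZ.
  have -> : a ^+ t.-1 *: y' = a ^+ t.-1 *: y - a ^+ t.-1 *: (y - y').
    by rewrite scalerBr opprB addrC subrK.
  by apply: inIB => //; apply: inIZ.
have my' : map_mpoly pi y' = 0.
  apply/mpolyP => m; rewrite mcoeff_map_mpoly mcoeff0; apply/hpi_ker.
  apply/negP => /negP hm; move: (unit_nz hchain hmax hnil hm).
  by rewrite -mcoeffZ y'0 mcoeff0 eqxx.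
set kk := g * z * G 1.
set H := (g * u - kk) + (y - y') - g * (u + v - 1).
have IH : inI T H.
  apply: inIB; last exact: inIM.
  apply: inID => //.
  by rewrite /kk -mulrA -mulrBr; apply: inIM.
have eg2 : g = kk + H + y' by rewrite /H /y; ring.
exists (map_mpoly pi g); split => //.
- exists kk, (map_mpoly pi H); split.
  + exact: K_G1.
  + exact: map_I.
  + by rewrite [in LHS]eg2 !rmorphD /= my' addr0.
- have sub : {subset msupp (map_mpoly pi g) <= msupp f}.
    move=> m; rewrite mcoeff_msupp mcoeff_map_mpoly => hm.
    apply: (msuppZ_le (c := a ^+ k)); rewrite -/f1.
    apply: (msupp_cmap (f := divX (a ^+ t.-1))); first exact: divX0.
    rewrite mcoeff_msupp; apply: contra hm => /eqP ->; exact/eqP/rmorph0.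
  move=> m /sub /rf H' kk'; rewrite sizeTb; exact: H'.
- apply: uniq_leq_size; first exact: msupp_uniq.
  move=> m; rewrite mcoeff_msupp mcoeff_map_mpoly => hm.
  apply: (msuppZ_le (c := a ^+ k)); rewrite -/f1.
  apply: (msupp_cmap (f := divX (a ^+ t.-1))); first exact: divX0.
  rewrite mcoeff_msupp; apply: contra hm => /eqP ->; exact/eqP/rmorph0.
Qed.

End Main.

From Stdlib Require Import Classical.

Lemma minQ (Q : nat -> Prop) : (exists n, Q n) -> exists d, Q d /\ forall m, Q m -> (d <= m)%N.
Proof.
move=> [n Qn]; elim: n {-2}n (leqnn n) Qn => [|N IH] n hn Qn.
  exists n; split => // m _; by move: hn; rewrite leqn0 => /eqP ->.
case: (classic (exists m, (m < n)%N /\ Q m)) => [[m [mn Qm]]|H].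
  by apply: (IH m) => //; rewrite -ltnS; apply: leq_trans mn hn.
exists n; split => // m Qm; rewrite leqNgt; apply/negP => mn; apply: H; by exists m.
Qed.


Unset Implicit Arguments.

Theorem mainTheorem8
  (R : finComNzRingType) (a : R) (t : nat)
  (hchain : chain_ring R)
  (hmax : maximal_ideal (princ_ideal a))
  (hnil : a ^+ t = 0 /\ a ^+ t.-1 != 0)
  (F : finFieldType) (pi : {rmorphism R -> F})
  (hpi_surj : forall y : F, exists x : R, pi x = y)
  (hpi_ker : forall x : R, pi x = 0 <-> x \in princ_ideal a)
  (r : nat) (T : 'I_r -> {poly R})
  (hmonic : forall i, T i \is monic)
  (hsqf : forall i, squarefree (map_poly pi (T i)))
  (G : nat -> {mpoly R[r]})
  (hadm : admissible T t G)
  (hhens : hensel_family T t G)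
  (hK0 : exists f, codeK T a t G f /\ ~ inI T f) :
  exists d : nat,
    is_min_dist T (codeK T a t G) d /\
    is_min_dist (fun i => map_poly pi (T i)) (codeImage pi T (codeK T a t G)) d.
Proof.
have D1 := dir1 hchain hmax hnil hpi_ker hmonic hadm hhens.
have D2 := dir2 (G := G) hchain hmax hnil hpi_surj hpi_ker hmonic.
pose Q n := exists g, [/\ codeImage pi T (codeK T a t G) g,
   reduced (fun i => map_poly pi (T i)) g, g != 0 & hweight g = n].
have exQ : exists n, Q n.
  case: hK0 => f [Kf nIf].
  case: (Red_all hmonic f) => f' [rf' If'].
  have Kf' : codeK T a t G f'.
    have -> : f' = f + - (f - f') by rewrite opprB addrC subrK.
    by apply: K_D => //; apply: K_I; apply: inIN.
  have nz : f' != 0 by apply/eqP => e; apply: nIf; rewrite e subr0 in If'.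
  case: (D1 _ Kf' rf' nz) => gb [C1 C2 C3 C4].
  by exists (hweight gb), gb.
case: (minQ exQ) => d [[g [Cg rg nzg wg]] mind].
exists d; split; last first.
  split; first by exists g.
  by move=> g' C r' nz'; apply: mind; exists g'.
split.
  case: (D2 _ Cg rg nzg) => f [Kf rf nzf wf].
  by exists f; split => //; rewrite wf.
move=> f Kf rf nzf.
case: (D1 _ Kf rf nzf) => gb [C1 C2 C3 C4].
apply: leq_trans C4; apply: mind; by exists gb.
Qed.
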